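(* Let $W$ be a standard one-dimensional Brownian motion, $T>0$, and let $f:\mathbb{R}\to\mathbb{R}$ be bounded with ${\rm osc}_f(\delta)\le C\delta^\alpha$ for some $\alpha\in(0,1]$, $C>0$ and all sufficiently small $\delta>0$. Let $(n_\varepsilon)_{\varepsilon>0}$ be positive integers with $n_\varepsilon\nearrow\infty$ as $\varepsilon\to0$, $\delta_\varepsilon=T/n_\varepsilon$, $s_i=i\delta_\varepsilon$ ($i=0,\dots,n_\varepsilon$), $q_\varepsilon=2\sqrt{\delta_\varepsilon|\log\delta_\varepsilon|}$, $i(t)=\min\{j\in\{0,\dots,n_\varepsilon\}:s_j\ge t\}$, and \[ L_{\varepsilon,P_\varepsilon}(t)=\sum_{i=1}^{i(t)}\big(f(\varepsilon W(s_i))-f(\varepsilon W(s_{i-1}))\big)\big(W(s_i)-W(s_{i-1})\big),\qquad t\in[0,T]. \] Then there is a positive constant $K$ such that for any $\delta>0$ and $\varepsilon>0$, \[ \mathsf{P}\Big\{\sup_{t\in[0,T]}|L_{\varepsilon,P_\varepsilon}(t)|>\delta\Big\}\le\mathsf{P}\Big\{|\log\delta_\varepsilon|\,{\rm osc}_f(\varepsilon q_\varepsilon)>\frac{q_\varepsilon\delta}{4T}\Big\}+K\delta_\varepsilon. \] (The first probability on the right is either $0$ or $1$.)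
   Context: ${\rm osc}_f(\delta)=\sup_{|t-s|<\delta}|f(s)-f(t)|$. *)

(* Defs.v *)
From HB Require Import structures.
From mathcomp Require Import all_boot all_order all_algebra.
From mathcomp Require Import all_classical all_reals all_analysis.
Set Implicit Arguments. Unset Strict Implicit. Unset Printing Implicit Defensive.
Import Order.TTheory GRing.Theory Num.Theory.
Import numFieldNormedType.Exports.
Local Open Scope classical_set_scope.
Local Open Scope ring_scope.

(* osc_f(d) = sup_{|t-s|<d} |f(s)-f(t)| (real supremum; finite for bounded f) *)
Definition osc {R : realType} (f : R -> R) (d : R) : R :=
  sup [set x | exists s t, `|t - s| < d /\ x = `|f s - f t|].

Definition mutually_independent {R : realType} {d} {Om : measurableType d}
  (P : probability Om R) (k : nat) (X : 'I_k -> Om -> R) : Prop :=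
  forall B : 'I_k -> set R, (forall i, measurable (B i)) ->
    P [set w | forall i, B i (X i w)] = (\prod_(i < k) P (X i @^-1` B i))%E.

Definition brownian_motion {R : realType} {d} {Om : measurableType d}
  (P : probability Om R) (W : R -> Om -> R) : Prop :=
  [/\ (forall t, 0 <= t -> measurable_fun setT (W t)),
      {ae P, forall w, W 0 w = 0 /\
          {within [set t : R | 0 <= t], continuous (fun t => W t w)}},
      (forall s t, 0 <= s -> s < t -> forall B : set R, measurable B ->
          P [set w | B (W t w - W s w)] = normal_prob 0 (Num.sqrt (t - s)) B) &
      (forall (k : nat) (tt : nat -> R), 0 <= tt 0%N ->
          (forall i, (i < k)%N -> tt i < tt i.+1) ->
          mutually_independent P (fun (i : 'I_k) w => W (tt i.+1) w - W (tt i) w))].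

Definition grid {R : realType} (n : nat) (T : R) (i : nat) : R := i%:R * (T / n%:R).

Definition grid_index {R : realType} (n : nat) (T : R) (t : R) : nat :=
  find (fun j : nat => t <= grid n T j) (iota 0 n.+1).

Definition Lsum {R : realType} {Om : Type} (f : R -> R) (W : R -> Om -> R)
  (eps : R) (n : nat) (T : R) (t : R) (w : Om) : R :=
  \sum_(1 <= i < (grid_index n T t).+1)
     (f (eps * W (grid n T i) w) - f (eps * W (grid n T i.-1) w)) *
     (W (grid n T i) w - W (grid n T i.-1) w).

(* Main.v *)
Require Import Defs.
From HB Require Import structures.
From mathcomp Require Import all_boot all_order all_algebra.
From mathcomp Require Import all_classical all_reals all_analysis.
From mathcomp Require Import ring lra measurable_realfun.
Import Order.TTheory GRing.Theory Num.Theory.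
Import numFieldNormedType.Exports.
Local Open Scope classical_set_scope.
Local Open Scope ring_scope.
Set Implicit Arguments. Unset Strict Implicit. Unset Printing Implicit Defensive.
Lemma pdf_eq (R : realType) (m s x : R) : s != 0 ->
  normal_pdf m s x = normal_peak s * expR (- (x - m) ^+ 2 / (s ^+ 2 *+ 2)).
Proof. by move=> s0; rewrite /normal_pdf (negbTE s0). Qed.

Lemma gauss_pt (R : realType) (s a x : R) : 0 < s -> 0 < a -> a <= `|x| ->
  normal_pdf 0 s x <= expR (- a ^+ 2 / (s ^+ 2 *+ 2)) *
     (normal_pdf a s x + normal_pdf (- a) s x).
Proof.
move=> s0 a0 ax; have s0' : s != 0 by rewrite gt_eqF.
rewrite !pdf_eq //.
set k := (s ^+ 2 *+ 2)^-1.
have k0 : 0 < k by rewrite invr_gt0 pmulrn_lgt0 // exprn_gt0.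
have p0 := normal_peak_ge0 s.
rewrite !mulNr subr0.
move: ax; rewrite ler_normr => /orP [] ax.
- rewrite mulrDr; apply: ler_wpDr; first by rewrite mulr_ge0 ?expR_ge0 ?mulr_ge0.
  rewrite mulrCA -expRD ler_wpM2l // ler_expR.
  have h : 0 <= k * (a * (x - a)) by apply: mulr_ge0; [exact: ltW | apply: mulr_ge0; [exact: ltW | rewrite subr_ge0]].
  nra.
- rewrite mulrDr; apply: ler_wpDl; first by rewrite mulr_ge0 ?expR_ge0 ?mulr_ge0.
  rewrite mulrCA -expRD ler_wpM2l // ler_expR.
  have h1 : 0 <= a * (- x - a) by nra.
  have h : 0 <= k * (a * (- x - a)) by apply: mulr_ge0 => //; exact: ltW.
  nra.
Qed.
Lemma gauss_tail (R : realType) (s a : R) : 0 < s -> 0 < a ->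
  (normal_prob 0 s [set x | (a <= `|x|)%R] <= (expR (- a ^+ 2 / (s ^+ 2 *+ 2)) *+ 2)%:E)%E.
Proof.
move=> s0 a0.
set c := expR _.
set D := [set x : R | a <= `|x|].
have mD : measurable D.
  have := @measurable_realfun.normr_measurable R setT measurableT _ (@measurable_itv R `[a, +oo[).
  rewrite setTI; congr measurable; apply/seteqP; split => x /=;
    by rewrite in_itv /= andbT.
have mg : measurable_fun setT (fun x => c * (normal_pdf a s x + normal_pdf (- a) s x)).
  by apply: measurable_realfun.measurable_funM => //; apply: measurable_realfun.measurable_funD; exact: measurable_normal_pdf.
have g0 : forall x, 0 <= c * (normal_pdf a s x + normal_pdf (- a) s x).
  by move=> x; rewrite mulr_ge0 ?expR_ge0 // addr_ge0 // normal_pdf_ge0.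
rewrite /normal_prob.
apply: (@le_trans _ _ (\int[lebesgue_measure]_(x in D) (c * (normal_pdf a s x + normal_pdf (- a) s x))%:E)%E).
  apply: ge0_le_integral => //.
  - by move=> x _; rewrite lee_fin normal_pdf_ge0.
  - apply/measurable_EFinP; apply: measurable_funTS; exact: measurable_normal_pdf.
  - by apply/measurable_EFinP; apply: measurable_funTS.
  - by move=> x Dx; rewrite lee_fin; exact: gauss_pt.
apply: le_trans.
  apply: (ge0_subset_integral lebesgue_measure mD measurableT _ _ (@subsetT _ D)).
  - by apply/measurable_EFinP.
  - by move=> x _; rewrite lee_fin.
under eq_integral do rewrite EFinM EFinD.
rewrite ge0_integralZl //; last 3 first.
- apply: emeasurable_funD; apply/measurable_EFinP; exact: measurable_normal_pdf.
- by move=> x _; rewrite adde_ge0 // lee_fin normal_pdf_ge0.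
- by rewrite lee_fin expR_ge0.
rewrite ge0_integralD //; last 4 first.
- by move=> x _; rewrite lee_fin normal_pdf_ge0.
- apply/measurable_EFinP; exact: measurable_normal_pdf.
- by move=> x _; rewrite lee_fin normal_pdf_ge0.
- apply/measurable_EFinP; exact: measurable_normal_pdf.
rewrite !integral_normal_pdf -EFinD -EFinM lee_fin.
by rewrite mulrDr mulr1 mulr2n.
Qed.
Section OscFacts.
Variables (R : realType) (f : R -> R) (M : R).
Hypothesis fM : forall x, `|f x| <= M.

Lemma osc_hub d : has_ubound [set x | exists s t, `|t - s| < d /\ x = `|f s - f t|].
Proof.
exists (M + M) => x [s [t [_ ->]]].
by apply: le_trans (ler_normB _ _) _; apply: lerD.
Qed.

Lemma osc_ub d s t : `|t - s| < d -> `|f s - f t| <= osc f d.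
Proof. by move=> h; rewrite /osc; apply: (ub_le_sup (osc_hub d)); exists s, t. Qed.

Lemma osc_ge0 d : 0 < d -> 0 <= osc f d.
Proof.
move=> d0; apply: le_trans (normr_ge0 (f 0 - f 0)) (osc_ub (s:=0) (t:=0) _).
by rewrite subrr normr0.
Qed.
End OscFacts.

Lemma holder_cont (R : realType) (f : R -> R) (M alpha C d0 : R) :
  (forall x, `|f x| <= M) -> 0 < alpha -> 0 < C -> 0 < d0 ->
  (forall dl, 0 < dl -> dl < d0 -> osc f dl <= C * dl `^ alpha) -> continuous f.
Proof.
move=> fM a0 C0 d00 hol x; apply/cvgrPdist_lt => e e0.
set z := (e / (C *+ 2)) `^ alpha^-1.
have ez0 : 0 < e / (C *+ 2) by rewrite divr_gt0 // pmulrn_lgt0.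
have z0 : 0 < z by rewrite powR_gt0.
set dl := Num.min (d0 / 2) z.
have dl0 : 0 < dl by rewrite lt_min z0 divr_gt0.
have dl1 : dl <= d0 / 2 by rewrite /dl ge_min lexx.
have dl2 : dl <= z by rewrite /dl ge_min lexx orbT.
have hosc : osc f dl < e.
  have dld : dl < d0.
    lra.
  apply: le_lt_trans (hol dl dl0 dld) _.
  have : dl `^ alpha <= z `^ alpha.
    by rewrite ge0_ler_powR // ?nnegrE ?ltW.
  rewrite /z -powRrM mulVf ?gt_eqF // powRr1; last exact: ltW ez0.
  move=> h.
  apply: le_lt_trans (ler_wpM2l (ltW C0) h) _.
  rewrite (_ : C * (e / (C *+ 2)) = e / 2); first lra.
  by field; rewrite gt_eqF.
apply/nbhs_ballP; exists dl => //= y /= hy.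
apply: le_lt_trans (osc_ub fM (d:=dl) (s:=x) (t:=y) _) hosc.
by rewrite distrC.
Qed.
Lemma grid_ge0 (R : realType) n (T : R) i : 0 <= T -> 0 <= grid n T i.
Proof. by move=> T0; rewrite /grid mulr_ge0 // divr_ge0. Qed.

Lemma gridN (R : realType) n (T : R) : (0 < n)%N -> grid n T n = T.
Proof.
by move=> n0; rewrite /grid mulrCA mulfV ?mulr1 // pnatr_eq0 -lt0n.
Qed.

Lemma gi_le (R : realType) n (T t : R) : (0 < n)%N -> t <= T ->
  (grid_index n T t <= n)%N.
Proof.
move=> n0 tT.
have : has (fun j : nat => t <= grid n T j) (iota 0 n.+1).
  by apply/hasP; exists n; [rewrite mem_iota /= add0n ltnSn | rewrite gridN].
by rewrite has_find size_iota ltnS.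
Qed.

Lemma msum d (Om : measurableType d) (R : realType) (g : nat -> Om -> R)
  (r : seq nat) : (forall i, measurable_fun setT (g i)) ->
  measurable_fun setT (fun w => \sum_(i <- r) g i w).
Proof.
move=> mg; elim: r => [|a r IH].
  have -> : (fun w => \sum_(i <- [::]) g i w) = cst 0.
    by apply/funext => w; rewrite big_nil.
  exact: measurable_cst.
have -> : (fun w => \sum_(i <- a :: r) g i w) = (fun w => g a w + \sum_(i <- r) g i w).
  by apply/funext => w; rewrite big_cons.
exact: measurable_funD.
Qed.
Lemma mabs (R : realType) (q : R) : measurable [set x : R | q <= `|x|].
Proof.
have := @normr_measurable R setT measurableT _ (@measurable_itv R `[q, +oo[).
rewrite setTI; congr measurable; apply/seteqP; split => x /=;
  by rewrite in_itv /= andbT.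
Qed.

Lemma mconst d (Om : measurableType d) (Pr : Prop) : measurable [set _ : Om | Pr].
Proof.
case: (pselect Pr) => h.
  by rewrite (_ : [set _ | Pr] = setT) //; apply/seteqP; split.
by rewrite (_ : [set _ | Pr] = set0) //; apply/seteqP; split.
Qed.

Theorem lemma3 (R : realType) (d : measure_display) (Om : measurableType d)
  (P : probability Om R) (W : R -> Om -> R) (T : R) (f : R -> R)
  (alpha C : R) (n : R -> nat) :
  brownian_motion P W ->
  0 < T ->
  (exists M : R, forall x, `|f x| <= M) ->
  0 < alpha <= 1 -> 0 < C ->
  (exists d0 : R, 0 < d0 /\ forall dl, 0 < dl -> dl < d0 -> osc f dl <= C * dl `^ alpha) ->
  (forall e, 0 < e -> (0 < n e)%N) ->
  (forall e1 e2, 0 < e1 -> e1 <= e2 -> (n e2 <= n e1)%N) ->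
  (forall N : nat, exists e0 : R, 0 < e0 /\ forall e, 0 < e -> e < e0 -> (N <= n e)%N) ->
  exists K : R, 0 < K /\
    forall dl eps : R, 0 < dl -> 0 < eps ->
      let de := T / (n eps)%:R in
      let qe := 2 * Num.sqrt (de * `|ln de|) in
      (P [set w | (dl < sup [set `|Lsum f W eps (n eps) T t w| | t in [set t | 0 <= t <= T]])%R]
       <= P [set w | (qe * dl / (4 * T) < `|ln de| * osc f (eps * qe))%R]
          + (K * de)%:E)%E.
Proof.
move=> [mW _ hinc _] T0 [M fM] /andP[a0 a1] C0 [d0 [d00 hol]] npos _ _.
have fc : continuous f := holder_cont fM a0 C0 d00 hol.
have mf : measurable_fun setT f := continuous_measurable_fun fc.
exists (T *+ 2 + 1); split; first by rewrite addr_gt0 // pmulrn_lgt0.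
move=> dl eps dl0 eps0; cbv zeta.
set de := T / (n eps)%:R.
set qe := 2 * Num.sqrt (de * `|ln de|).
set N := n eps.
have N0 : (0 < N)%N := npos eps eps0.
have de0 : 0 < de by rewrite divr_gt0 // ltr0n.
have Nde : N%:R * de = T by rewrite /de mulrCA mulfV ?mulr1 // pnatr_eq0 -lt0n.
have mWt i : measurable_fun setT (W (grid N T i)) := mW _ (grid_ge0 N i (ltW T0)).
set F := fun k : nat => [set w | qe <= `|W (grid N T k.+1) w - W (grid N T k) w|].
have mF k : measurable (F k).
  have := measurable_funB (mWt k.+1) (mWt k) measurableT (mabs qe).
  by rewrite setTI.
set Gc := \big[setU/set0]_(k < N) F k.
have mGc : measurable Gc by apply: bigsetU_measurable.
set Ls := fun j w => \sum_(1 <= i < j.+1)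
   (f (eps * W (grid N T i) w) - f (eps * W (grid N T i.-1) w)) *
   (W (grid N T i) w - W (grid N T i.-1) w).
have mLs j : measurable_fun setT (Ls j).
  apply: msum => i; apply: measurable_funM; apply: measurable_funB => //.
  - apply: measurableT_comp => //; apply: measurable_funM => //.
  - apply: measurableT_comp => //; apply: measurable_funM => //.
have LsE t w : Lsum f W eps N T t w = Ls (grid_index N T t) w by [].
set A := [set w | (dl < sup _)%R].
set S := fun w => [set `|Lsum f W eps N T t w| | t in [set t | 0 <= t <= T]].
have S0 w : S w !=set0.
  by exists (`|Lsum f W eps N T 0 w|); exists 0 => //=; rewrite lexx ltW.
have Sub w : has_ubound (S w).
  exists (\sum_(j < N.+1) `|Ls j w|) => y [t /andP[t0 tT] <-].
  rewrite LsE.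
  have jN : (grid_index N T t < N.+1)%N by rewrite ltnS gi_le.
  rewrite (bigD1 (Ordinal jN)) //= lerDl sumr_ge0 //.
set J := [set j | exists2 t, 0 <= t <= T & grid_index N T t = j].
have eqA : A = \bigcup_(j in J) [set w | (dl < `|Ls j w|)%R].
  apply/seteqP; split => w /=.
  - move=> /(sup_gt (S0 w)) [y [t tT <-]] hy.
    by exists (grid_index N T t) => //; exists t.
  - move=> [j [t tT <-]] /= hj.
    apply: lt_le_trans hj _; rewrite -LsE.
    by apply: (ub_le_sup (Sub w)); exists t.
have mA : measurable A.
  rewrite eqA; apply: bigcup_measurable => j _.
  have := measurableT_comp (@normr_measurable R setT) (mLs j) measurableT
    (@measurable_itv R `]dl, +oo[).
  rewrite setTI; congr measurable; apply/seteqP; split => w /=;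
    by rewrite in_itv /= andbT.
set B := [set _ | (qe * _ / _ < _)%R].
have mB : measurable B by apply: mconst.
have hq2 : qe ^+ 2 = 4 * (de * `|ln de|).
  rewrite /qe exprMn (sqr_sqrtr (mulr_ge0 (ltW de0) (normr_ge0 _))); ring.
have AB : A `<=` B `|` Gc.
  move=> w Aw; case: (pselect (Gc w)) => [h|nG]; [by right | left].
  have hk i : (0 < i <= N)%N -> `|W (grid N T i) w - W (grid N T i.-1) w| < qe.
    case: i => // i /= iN; rewrite ltNge; apply/negP => hle; apply: nG.
    rewrite /Gc -bigcup_mkord; exists i => //=.
  have qe0 : 0 < qe by apply: le_lt_trans (normr_ge0 _) (hk 1%N _); rewrite /= N0.
  set o := osc f (eps * qe).
  have o0 : 0 <= o by apply: (osc_ge0 fM); rewrite mulr_gt0.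
  have bnd j : (j <= N)%N -> `|Ls j w| <= N%:R * (o * qe).
    move=> jN; apply: le_trans (ler_norm_sum _ _ _) _.
    apply: (@le_trans _ _ (\sum_(1 <= i < j.+1) (o * qe))).
      rewrite big_nat [X in _ <= X]big_nat; apply: ler_sum => i /andP[i1 ij].
      have iN : (0 < i <= N)%N by rewrite i1 /= (leq_trans _ jN).
      rewrite normrM; apply: ler_pM => //; last exact: ltW (hk i iN).
      apply: (osc_ub fM).
      by rewrite -mulrBr normrM gtr0_norm // ltr_pM2l // distrC hk.
    rewrite sumr_const_nat subn1 /= -(mulr_natl (o * qe) j).
    by apply: ler_wpM2r; [rewrite mulr_ge0 // ltW | rewrite ler_nat].
  move: Aw; rewrite eqA => -[j [t /andP[t0 tT] <-]] /= hj.
  have := lt_le_trans hj (bnd _ (gi_le N0 tT)) => hdl.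
  rewrite /B /=.
  rewrite ltr_pdivrMr ?mulr_gt0 //.
  have h1 : qe * dl < qe * (N%:R * (o * qe)) by rewrite ltr_pM2l.
  apply: lt_le_trans h1 _; rewrite le_eqVlt; apply/orP; left; apply/eqP.
  rewrite -Nde (_ : qe * (N%:R * (o * qe)) = N%:R * o * qe ^+ 2); last by ring.
  by rewrite hq2 -/o; ring.
apply: le_trans (le_measure P (mem_set mA) (mem_set (measurableU _ _ mB mGc)) AB) _.
apply: le_trans (measureU2 P mB mGc) _.
apply: leeD2l.
have [de1|de1] := leP 1 de.
  apply: le_trans (probability_le1 P mGc) _; rewrite lee_fin.
  have : 0 <= T *+ 2 by rewrite mulrn_wge0 // ltW.
  nra.
have Lneg : ln de < 0 by rewrite ln_lt0 // de0 de1.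
have qe0 : 0 < qe.
  by rewrite mulr_gt0 // sqrtr_gt0 mulr_gt0 // normr_gt0 lt_eqF.
apply: le_trans (content_subadditive P (A:=Gc) (F:=F) (n:=N) (fun k _ => mF k) mGc (@subset_refl _ _)) _.
apply: (@le_trans _ _ (\sum_(k < N) (de ^+ 2 *+ 2)%:E)%E).
  apply: lee_sum => k _.
  have gk : grid N T k < grid N T k.+1.
    by rewrite /grid ltr_pM2r ?ltr_nat // divr_gt0 // ltr0n.
  have := hinc _ _ (grid_ge0 N k (ltW T0)) gk _ (mabs qe).
  move=> h.
  change (P [set w | ([set x | qe <= `|x|] (W (grid N T k.+1) w - W (grid N T k) w))%R]
    <= (de ^+ 2 *+ 2)%:E)%E.
  rewrite h.
  have -> : grid N T k.+1 - grid N T k = de.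
    by rewrite /grid -mulrBl -natrB // subSnn mul1r.
  apply: le_trans (gauss_tail _ _) _ => //; first by rewrite sqrtr_gt0.
  rewrite lee_fin ler_pMn2r //= (sqr_sqrtr (ltW de0)) hq2 ltr0_norm //.
  rewrite (_ : - (4 * (de * - ln de)) / (de *+ 2) = 2%:R * ln de); last first.
    by field; rewrite gt_eqF.
  by rewrite expRM_natl lnK.
rewrite sumEFin sumr_const card_ord lee_fin.
rewrite -mulr_natr -Nde.
have : 0 <= N%:R * de by rewrite mulr_ge0 // ltW.
nra.
Qed.
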